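(* Let $n=d_z$ and $d=d_x$. Suppose that for every $\theta\in\Theta$: (1) $f_\theta$ is differentiable and its Jacobian $J_{f_\theta}(x)\in\mathbb{R}^{n\times d}$ has full rank (rank $\min(n,d)$) for all $x$; (2) there exist $n+1$ points $y^0,\dots,y^n\in\mathcal{Y}$ such that the $n\times n$ matrix $R_\theta=\big(g_\theta(y^1)-g_\theta(y^0),\dots,g_\theta(y^n)-g_\theta(y^0)\big)$ is invertible. Then for any $\theta,\theta'\in\Theta$, if $p_\theta(x\mid y)=p_{\theta'}(x\mid y)$ for all $x\in\mathcal{X},y\in\mathcal{Y}$, there exist a matrix $A\in\mathbb{R}^{n\times n}$ of rank at least $\min(n,d_x)$ and a vector $c\in\mathbb{R}^n$ such that $f_\theta(x)=Af_{\theta'}(x)+c$ for all $x\in\mathcal{X}$. Symmetrically, if for every $\theta\in\Theta$, $g_\theta$ is differentiable with full-rank Jacobian everywhere and there exist $n+1$ points $x^0,\dots,x^n\in\mathcal{X}$ such that $Q_\theta=\big(f_\theta(x^1)-f_\theta(x^0),\dots,f_\theta(x^n)-f_\theta(x^0)\big)$ is invertible, then $p_\theta(\cdot\mid\cdot)=p_{\theta'}(\cdot\mid\cdot)$ implies that there exist $B\in\mathbb{R}^{n\times n}$ of rank at least $\min(n,d_y)$ and $e\in\mathbb{R}^n$ with $g_\theta(y)=Bg_{\theta'}(y)+e$ for all $y\in\mathcal{Y}$. Finally, if all four conditions above hold for every $\theta\in\Theta$, then the matrices $A$ and $B$ are invertible (rank $n$).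
   Context: Let $\mathcal{X}\subset\mathbb{R}^{d_x}$ and $\mathcal{Y}\subset\mathbb{R}^{d_y}$. A parameter set $\Theta$ indexes pairs of feature extractors $f_\theta:\mathcal{X}\to\mathbb{R}^{d_z}$ and $g_\theta:\mathcal{Y}\to\mathbb{R}^{d_z}$ such that for every $y\in\mathcal{Y}$ the normalizing constant $Z(y;\theta)=\int_{\mathcal{X}}\exp(-f_\theta(x)^\top g_\theta(y))\,dx$ is finite. The conditional energy-based model is $p_\theta(x\mid y)=\exp(-f_\theta(x)^\top g_\theta(y))/Z(y;\theta)$. *)

(* Defs.v *)
From HB Require Import structures.
From Stdlib Require Import Reals Lra ClassicalEpsilon FunctionalExtensionality.
From mathcomp Require Import all_boot all_order all_algebra.

Set Implicit Arguments.
Unset Strict Implicit.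
Unset Printing Implicit Defensive.

Definition Req_bool (x y : R) : bool := if Req_EM_T x y then true else false.

Lemma Req_boolP : Equality.axiom Req_bool.
Proof. by move=> x y; rewrite /Req_bool; case: Req_EM_T => h; constructor. Qed.

HB.instance Definition _ := hasDecEq.Build R Req_boolP.

Definition Rfind (P : pred R) (n : nat) : option R :=
  match excluded_middle_informative (exists x, P x) with
  | left ex => Some (proj1_sig (constructive_indefinite_description _ ex))
  | right _ => None
  end.

Lemma Rfind_correct (P : pred R) n x : Rfind P n = Some x -> P x.
Proof.
rewrite /Rfind; case: excluded_middle_informative => // ex [<-].
exact: proj2_sig (constructive_indefinite_description _ ex).
Qed.

Lemma Rfind_complete (P : pred R) : (exists x, P x) -> exists n, Rfind P n.
Proof.
by move=> ex; exists 0%N; rewrite /Rfind; case: excluded_middle_informative.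
Qed.

Lemma Rfind_ext (P Q : pred R) : P =1 Q -> Rfind P =1 Rfind Q.
Proof.
by move=> PQ; have -> : P = Q by apply: functional_extensionality.
Qed.

HB.instance Definition _ := hasChoice.Build R Rfind_correct Rfind_complete Rfind_ext.

Lemma R_addA : associative Rplus. Proof. by move=> *; rewrite Rplus_assoc. Qed.
Lemma R_addC : commutative Rplus. Proof. by move=> *; rewrite Rplus_comm. Qed.
Lemma R_add0 : left_id R0 Rplus. Proof. by move=> *; rewrite Rplus_0_l. Qed.
Lemma R_addN : left_inverse R0 Ropp Rplus. Proof. by move=> *; rewrite Rplus_opp_l. Qed.

HB.instance Definition _ := GRing.isZmodule.Build R R_addA R_addC R_add0 R_addN.

Lemma R_mulA : associative Rmult. Proof. by move=> *; rewrite Rmult_assoc. Qed.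
Lemma R_mulC : commutative Rmult. Proof. by move=> *; rewrite Rmult_comm. Qed.
Lemma R_mul1 : left_id R1 Rmult. Proof. by move=> *; rewrite Rmult_1_l. Qed.
Lemma R_mulDl : left_distributive Rmult Rplus.
Proof. by move=> *; rewrite Rmult_plus_distr_r. Qed.
Lemma R_one_neq0 : R1 != R0.
Proof. by apply/eqP; exact: R1_neq_R0. Qed.

HB.instance Definition _ :=
  GRing.Zmodule_isComNzRing.Build R R_mulA R_mulC R_mul1 R_mulDl R_one_neq0.

Definition Rinv0 (x : R) : R := if Req_bool x R0 then R0 else Rinv x.

Lemma R_mulVf (x : R) : x != R0 -> Rmult (Rinv0 x) x = R1.
Proof.
move=> /eqP nx; rewrite /Rinv0; case: Req_boolP => // _.
exact: Rinv_l.
Qed.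

Lemma R_inv0 : Rinv0 R0 = R0.
Proof. by rewrite /Rinv0; case: Req_boolP. Qed.

HB.instance Definition _ := GRing.ComNzRing_isField.Build R R_mulVf R_inv0.

Local Open Scope ring_scope.

(* l^1 norm on R^k (all norms on R^k are equivalent, so the choice is
   immaterial for openness and differentiability). *)
Definition vnorm (k : nat) (v : 'cV[R]_k) : R :=
  (\sum_(i < k) Rabs (v i ord0))%R.

Definition is_open (k : nat) (S : 'cV[R]_k -> Prop) : Prop :=
  forall x, S x -> exists delta : R, Rlt R0 delta /\
    forall z, Rlt (vnorm (z - x)%R) delta -> S z.

Definition is_jacobian (k m : nat) (F : 'cV[R]_k -> 'cV[R]_m)
    (x : 'cV[R]_k) (J : 'M[R]_(m, k)) : Prop :=
  forall eps : R, Rlt R0 eps -> exists delta : R, Rlt R0 delta /\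
    forall h : 'cV[R]_k, Rlt (vnorm h) delta ->
      Rle (vnorm (F (x + h) - F x - J *m h)%R) (Rmult eps (vnorm h)).

Definition diff_full_rank (k m : nat) (S : 'cV[R]_k -> Prop)
    (F : 'cV[R]_k -> 'cV[R]_m) : Prop :=
  forall x, S x -> exists J : 'M[R]_(m, k),
    is_jacobian F x J /\ \rank J = minn m k.

Definition diff_matrix (k n : nat) (G : 'cV[R]_k -> 'cV[R]_n)
    (pts : 'I_n.+1 -> 'cV[R]_k) : 'M[R]_n :=
  \matrix_(i < n, j < n) ((G (pts (lift ord0 j)) i ord0)
                           - (G (pts ord0)) i ord0)%R.

Definition has_invertible_diffs (k n : nat) (S : 'cV[R]_k -> Prop)
    (G : 'cV[R]_k -> 'cV[R]_n) : Prop :=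
  exists pts : 'I_n.+1 -> 'cV[R]_k,
    (forall i, S (pts i)) /\ diff_matrix G pts \in unitmx.

Definition inner (n : nat) (u v : 'cV[R]_n) : R := ((u^T *m v) ord0 ord0).

Definition ebm (dx dy n : nat) (f : 'cV[R]_dx -> 'cV[R]_n)
    (g : 'cV[R]_dy -> 'cV[R]_n) (Z : 'cV[R]_dy -> R)
    (x : 'cV[R]_dx) (y : 'cV[R]_dy) : R :=
  Rdiv (exp (Ropp (inner (f x) (g y)))) (Z y).

(* Main.v *)
Require Import Defs.
From HB Require Import structures.
From Stdlib Require Import Reals Lra Classical.
From mathcomp Require Import all_boot all_order all_algebra.
Import GRing.Theory.
Set Implicit Arguments.
Unset Strict Implicit.
Local Open Scope ring_scope.


Lemma addRE (a b : R) : (a + b)%R = Rplus a b. Proof. by []. Qed.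
Lemma mulRE (a b : R) : (a * b)%R = Rmult a b. Proof. by []. Qed.
Lemma oppRE (a : R) : (- a)%R = Ropp a. Proof. by []. Qed.
Lemma zeroRE : (0 : R)%R = R0. Proof. by []. Qed.

Lemma sum_le k (F G : 'I_k -> R) : (forall i, Rle (F i) (G i)) ->
  Rle (\sum_(i < k) F i) (\sum_(i < k) G i).
Proof.
move=> H; apply: (big_rec2 (fun a b => Rle a b)) => [|i a b _ Hab].
  exact: Rle_refl.
by rewrite !addRE; have := H i; lra.
Qed.

Lemma sum_ge0 k (F : 'I_k -> R) : (forall i, Rle R0 (F i)) ->
  Rle R0 (\sum_(i < k) F i).
Proof.
move=> H; apply: (big_rec (fun a => Rle R0 a)) => [|i a _ Ha].
  exact: Rle_refl.
by rewrite !addRE; have := H i; lra.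
Qed.

Lemma Rabs_sum k (F : 'I_k -> R) :
  Rle (Rabs (\sum_(i < k) F i)) (\sum_(i < k) Rabs (F i)).
Proof.
apply: (big_rec2 (fun a b => Rle (Rabs a) b)) => [|i a b _ Hab].
  change (Rle (Rabs R0) R0); rewrite Rabs_R0; lra.
rewrite !addRE; have := Rabs_triang (F i) a; lra.
Qed.

Lemma vnorm_ge0 k (v : 'cV[R]_k) : Rle R0 (vnorm v).
Proof. apply: sum_ge0 => i; exact: Rabs_pos. Qed.

Lemma vnorm_add k (u v : 'cV[R]_k) : Rle (vnorm (u + v)) (Rplus (vnorm u) (vnorm v)).
Proof.
rewrite /vnorm -addRE -big_split /=; apply: sum_le => i.
rewrite !mxE addRE; exact: Rabs_triang.
Qed.

Lemma vnorm_scale k (a : R) (v : 'cV[R]_k) : vnorm (a *: v) = Rmult (Rabs a) (vnorm v).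
Proof.
rewrite /vnorm -mulRE mulr_sumr; apply: eq_bigr => i _.
by rewrite !mxE mulRE Rabs_mult.
Qed.

Lemma vnorm_opp k (v : 'cV[R]_k) : vnorm (- v) = vnorm v.
Proof.
rewrite /vnorm; apply: eq_bigr => i _; by rewrite !mxE oppRE Rabs_Ropp.
Qed.

Lemma coord_le k (v : 'cV[R]_k) i : Rle (Rabs (v i ord0)) (vnorm v).
Proof.
rewrite /vnorm (bigD1 i) //= addRE.
have : Rle R0 (\sum_(j < k | j != i) Rabs (v j ord0)).
  apply: (big_rec (fun a => Rle R0 a)) => [|j a _ Ha].
    exact: Rle_refl.
  by rewrite addRE; have := Rabs_pos (v j ord0); lra.
move=> H; rewrite -{1}(Rplus_0_r (Rabs _)); apply: Rplus_le_compat_l; exact: H.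
Qed.

Lemma vnorm_eq0 k (v : 'cV[R]_k) : vnorm v = R0 -> v = 0.
Proof.
move=> H; apply/matrixP => i j; rewrite (ord1 j) mxE.
have := coord_le v i; rewrite H => h.
have := Rabs_pos (v i ord0) => h2.
have h3 : Rabs (v i ord0) = R0 by lra.
by apply: NNPP => hn; exact: (Rabs_no_R0 _ hn h3).
Qed.

Definition mnorm m k (A : 'M[R]_(m, k)) : R :=
  \sum_(i < m) \sum_(j < k) Rabs (A i j).

Lemma mnorm_ge0 m k (A : 'M[R]_(m, k)) : Rle R0 (mnorm A).
Proof. apply: sum_ge0 => i; apply: sum_ge0 => j; exact: Rabs_pos. Qed.

Lemma vnorm_mul m k (A : 'M[R]_(m, k)) (v : 'cV[R]_k) :
  Rle (vnorm (A *m v)) (Rmult (mnorm A) (vnorm v)).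
Proof.
rewrite /vnorm /mnorm -mulRE mulr_suml; apply: sum_le => i.
rewrite mxE mulr_suml.
apply: Rle_trans (Rabs_sum _) _.
apply: sum_le => j; rewrite mulRE Rabs_mult.
apply: Rmult_le_compat_l; first exact: Rabs_pos.
exact: coord_le.
Qed.

Lemma vnorm_delta k (l : 'I_k) : vnorm (delta_mx l ord0 : 'cV[R]_k) = R1.
Proof.
rewrite /vnorm (bigD1 l) //= big1 => [|j /negbTE jl]; last first.
  by rewrite mxE jl /= Rabs_R0.
rewrite mxE !eqxx /= Rabs_R1; change (Rplus R1 R0 = R1); lra.
Qed.

Lemma aux_div (M eps : R) : Rle R0 M ->
  @eq R (Rplus (Rmult M (Rdiv eps (Rmult (IZR 2) (Rplus M R1))))
               (Rdiv eps (Rmult (IZR 2) (Rplus M R1)))) (Rdiv eps (IZR 2)).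
Proof. move=> h; change R0 with (IZR Z0) in h. field. change R1 with (IZR 1). lra. Qed.

Lemma log_eq (a a' z z' : R) : Rlt R0 z -> Rlt R0 z' ->
  Rdiv (exp (Ropp a)) z = Rdiv (exp (Ropp a')) z' ->
  a = Rplus a' (Rplus (ln z') (Ropp (ln z))).
Proof.
move=> hz hz' H.
change R0 with (IZR Z0) in hz, hz'.
have E : Rmult (exp (Ropp a)) z' = Rmult (exp (Ropp a')) z.
  have e1 : Rmult (exp (Ropp a)) z' = Rmult (Rmult (Rdiv (exp (Ropp a)) z) z) z'.
    field; lra.
  rewrite e1 H; field; lra.
have := congr1 ln E.
rewrite !ln_mult; try apply: exp_pos; try lra.
rewrite !ln_exp; lra.
Qed.

From mathcomp Require Import ring.


Lemma R0E : R0 = IZR Z0. Proof. by []. Qed.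

Ltac Lra := change R0 with (IZR Z0) in *; change R1 with (IZR 1) in *; lra.
Ltac Nra := change R0 with (IZR Z0) in *; change R1 with (IZR 1) in *; nra.

Lemma small_eq0 k (v : 'cV[R]_k) :
  (forall eps, Rlt R0 eps -> Rle (vnorm v) eps) -> v = 0.
Proof.
move=> H; apply: vnorm_eq0.
have h0 := vnorm_ge0 v.
apply: NNPP => hn.
have hp : Rlt R0 (vnorm v) by Lra.
have hq : Rlt R0 (Rdiv (vnorm v) (IZR 2)) by Lra.
have := H _ hq; Lra.
Qed.

Lemma jac_lin k m p (F : 'cV[R]_k -> 'cV[R]_m) (G : 'cV[R]_k -> 'cV[R]_p)
  (S : 'cV[R]_k -> Prop) x J J' A c :
  is_open S -> S x -> (forall z, S z -> F z = A *m G z + c) ->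
  is_jacobian F x J -> is_jacobian G x J' -> J = A *m J'.
Proof.
move=> hS Sx hFG hJ hJ'.
apply/eqP; rewrite -subr_eq0; apply/eqP.
set D := J - A *m J'.
suff hc : forall l, D *m delta_mx l (ord0 : 'I_1) = 0.
  apply/matrixP => i l; have := congr1 (fun N : 'cV[R]_m => N i ord0) (hc l).
  by rewrite -colE !mxE.
move=> l; apply: small_eq0 => eps heps.
set M := mnorm A.
have hM : Rle R0 M := mnorm_ge0 A.
set e2 := Rdiv eps (Rmult (IZR 2) (Rplus M R1)).
have he2 : Rlt R0 e2 by apply: Rdiv_lt_0_compat => //; Lra.
have hMe2 : @eq R (Rplus (Rmult M e2) e2) (Rdiv eps (IZR 2)).
  exact: aux_div.
have heps2 : Rlt R0 (Rdiv eps (IZR 2)) by Lra.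
have [d1 [hd1 H1]] := hJ _ heps2.
have [d2 [hd2 H2]] := hJ' e2 he2.
have [d3 [hd3 H3]] := hS x Sx.
set t := Rdiv (Rmin (Rmin d1 d2) d3) (IZR 2).
have hmin : Rlt R0 (Rmin (Rmin d1 d2) d3) by repeat apply: Rmin_glb_lt.
have ht : Rlt R0 t by rewrite /t; Lra.
have m1 := Rmin_l (Rmin d1 d2) d3.
have m2 := Rmin_r (Rmin d1 d2) d3.
have m3 := Rmin_l d1 d2.
have m4 := Rmin_r d1 d2.
have ht' : Rlt t (Rmin (Rmin d1 d2) d3) by rewrite /t; Lra.
set e := delta_mx l (ord0 : 'I_1) : 'cV[R]_k.
set h := t *: e.
have hh : vnorm h = t.
  by rewrite /h vnorm_scale vnorm_delta Rabs_pos_eq; Lra.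
have Sxh : S (x + h) by apply: H3; rewrite addrC addKr hh; Lra.
have hh1 : Rlt (vnorm h) d1 by Lra.
have hh2 : Rlt (vnorm h) d2 by Lra.
have r1 := H1 h hh1.
have r2 := H2 h hh2.
have eqD : D *m h = A *m (G (x + h) - G x - J' *m h) - (F (x + h) - F x - J *m h).
  rewrite !hFG // /D mulmxBl -mulmxA !mulmxBr.
  move: (J *m h) (A *m (J' *m h)) (A *m G (x + h)) (A *m G x) => a1 a2 a3 a4.
  apply/matrixP => i j; rewrite !mxE; ring.
have hb : Rle (vnorm (D *m h)) (Rmult eps t).
  rewrite eqD; apply: Rle_trans (vnorm_add _ _) _; rewrite vnorm_opp.
  have := vnorm_mul A (G (x + h) - G x - J' *m h); rewrite -/M.
  rewrite hh in r1 r2.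
  have : Rle (Rmult M (vnorm (G (x + h) - G x - J' *m h))) (Rmult M (Rmult e2 t)).
    exact: Rmult_le_compat_l.
  have : Rmult M (Rmult e2 t) = Rmult (Rmult M e2) t by rewrite Rmult_assoc.
  have : Rmult (Rdiv eps (IZR 2)) t = Rmult (Rplus (Rmult M e2) e2) t by rewrite hMe2.
  have : Rmult (Rplus (Rmult M e2) e2) t = Rplus (Rmult (Rmult M e2) t) (Rmult e2 t) by rewrite Rmult_plus_distr_r.
  have : Rlt R0 (Rmult e2 t) by apply: Rmult_lt_0_compat.
  have : Rmult eps t = Rplus (Rmult (Rdiv eps (IZR 2)) t) (Rmult (Rdiv eps (IZR 2)) t).
    rewrite -Rmult_plus_distr_r; congr Rmult; Lra.
  Lra.
move: hb; rewrite /h -scalemxAr vnorm_scale Rabs_pos_eq; last Lra.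
move=> hb.
have : Rle (Rmult t (vnorm (D *m e))) (Rmult t eps) by rewrite [Rmult t eps]Rmult_comm.
move=> /(Rmult_le_reg_l _ _ _ ht); done.
Qed.


Lemma inner_sym n (u v : 'cV[R]_n) : inner u v = inner v u.
Proof. rewrite /inner !mxE; apply: eq_bigr => i _; by rewrite !mxE mulrC. Qed.

Lemma row_diff k n (w : 'cV[R]_n) (G : 'cV[R]_k -> 'cV[R]_n) pts j :
  (w^T *m diff_matrix G pts) ord0 j =
  inner w (G (pts (lift ord0 j))) - inner w (G (pts ord0)).
Proof.
rewrite /inner !mxE -sumrB; apply: eq_bigr => i _; by rewrite !mxE mulrBr.
Qed.

Lemma lin_ident (T : Type) (P : T -> Prop) n (u u' : T -> 'cV[R]_n)
  (M M' : 'M[R]_n) (b : 'rV[R]_n) : M \in unitmx ->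
  (forall t, P t -> (u t)^T *m M = (u' t)^T *m M' + b) ->
  forall t, P t -> u t = ((invmx M)^T *m M'^T) *m u' t + (invmx M)^T *m b^T.
Proof.
move=> uM H t Pt.
have : (u t)^T = ((u' t)^T *m M' + b) *m invmx M by rewrite -H // mulmxK.
move=> /(congr1 trmx); rewrite trmxK => ->.
by rewrite trmx_mul raddfD /= trmx_mul trmxK mulmxDr mulmxA.
Qed.

Lemma ident dA dB n (SA : 'cV[R]_dA -> Prop) (SB : 'cV[R]_dB -> Prop)
  (F F' : 'cV[R]_dA -> 'cV[R]_n) (G G' : 'cV[R]_dB -> 'cV[R]_n)
  (ha : 'cV[R]_dA -> R) (hb : 'cV[R]_dB -> R) :
  has_invertible_diffs SB G ->
  (forall u v, SA u -> SB v -> inner (F u) (G v) = inner (F' u) (G' v) + (ha u + hb v)) ->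
  exists (A : 'M[R]_n) (c : 'cV[R]_n), forall u, SA u -> F u = A *m F' u + c.
Proof.
case=> p [pS pU] H.
set b : 'rV[R]_n := \row_j (hb (p (lift ord0 j)) - hb (p ord0)).
eexists; eexists; apply: (lin_ident (M' := diff_matrix G' p) (b := b) pU).
move=> u Su; apply/matrixP => i j; rewrite (ord1 i).
rewrite [RHS]mxE !row_diff mxE !H //; ring.
Qed.

Lemma diff_affine k n (S : 'cV[R]_k -> Prop) (F G : 'cV[R]_k -> 'cV[R]_n) A c pts :
  (forall z, S z -> F z = A *m G z + c) -> (forall i, S (pts i)) ->
  diff_matrix F pts = A *m diff_matrix G pts.
Proof.
move=> H hp; apply/matrixP => i j; rewrite !mxE !H // !mxE.
have -> : forall a b c : R, (a + c) - (b + c) = a - b by move=> *; ring.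
rewrite -sumrB; apply: eq_bigr => q _; by rewrite !mxE mulrBr.
Qed.

Lemma rank_from k n (S : 'cV[R]_k -> Prop) (F F' : 'cV[R]_k -> 'cV[R]_n) A c x0 :
  is_open S -> diff_full_rank S F -> diff_full_rank S F' ->
  (forall x, S x -> F x = A *m F' x + c) -> S x0 -> (minn n k <= \rank A)%N.
Proof.
move=> hS hF hF' hA hx0.
have [J [hJ rJ]] := hF x0 hx0.
have [J' [hJ' _]] := hF' x0 hx0.
have E := jac_lin hS hx0 hA hJ hJ'.
by rewrite -rJ E; exact: mxrankM_maxl.
Qed.

Unset Implicit Arguments.

Theorem theorem1 (dx dy n : nat)
    (X : 'cV[R]_dx -> Prop) (Y : 'cV[R]_dy -> Prop) (Theta : Type)
    (f : Theta -> 'cV[R]_dx -> 'cV[R]_n) (g : Theta -> 'cV[R]_dy -> 'cV[R]_n)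
    (Z : Theta -> 'cV[R]_dy -> R)
    (hX : is_open X) (hY : is_open Y)
    (hZ : forall th y, Y y -> Rlt R0 (Z th y)) :
  (* first claim: identifiability of f *)
  ((forall th, diff_full_rank X (f th)) ->
   (forall th, has_invertible_diffs Y (g th)) ->
   forall th th',
     (forall x y, X x -> Y y ->
        ebm (f th) (g th) (Z th) x y = ebm (f th') (g th') (Z th') x y) ->
     exists (A : 'M[R]_n) (c : 'cV[R]_n),
       (minn n dx <= \rank A)%N /\
       forall x, X x -> f th x = A *m f th' x + c)
  /\
  (* second claim: identifiability of g *)
  ((forall th, diff_full_rank Y (g th)) ->
   (forall th, has_invertible_diffs X (f th)) ->
   forall th th',
     (forall x y, X x -> Y y ->
        ebm (f th) (g th) (Z th) x y = ebm (f th') (g th') (Z th') x y) ->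
     exists (B : 'M[R]_n) (e : 'cV[R]_n),
       (minn n dy <= \rank B)%N /\
       forall y, Y y -> g th y = B *m g th' y + e)
  /\
  (* third claim: under all four conditions, A and B are invertible *)
  ((forall th, diff_full_rank X (f th)) ->
   (forall th, has_invertible_diffs Y (g th)) ->
   (forall th, diff_full_rank Y (g th)) ->
   (forall th, has_invertible_diffs X (f th)) ->
   forall th th',
     (forall x y, X x -> Y y ->
        ebm (f th) (g th) (Z th) x y = ebm (f th') (g th') (Z th') x y) ->
     exists (A : 'M[R]_n) (c : 'cV[R]_n) (B : 'M[R]_n) (e : 'cV[R]_n),
       \rank A = n /\ \rank B = n /\
       (forall x, X x -> f th x = A *m f th' x + c) /\
       (forall y, Y y -> g th y = B *m g th' y + e)).
Proof.
have key : forall th th',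
    (forall x y, X x -> Y y ->
        ebm (f th) (g th) (Z th) x y = ebm (f th') (g th') (Z th') x y) ->
    forall x y, X x -> Y y ->
    inner (f th x) (g th y) = inner (f th' x) (g th' y) + (ln (Z th' y) - ln (Z th y)).
  move=> th th' heq x y hx hy.
  exact: (log_eq (hZ th y hy) (hZ th' y hy) (heq x y hx hy)).
have L1 : forall th th',
    (forall x y, X x -> Y y ->
        ebm (f th) (g th) (Z th) x y = ebm (f th') (g th') (Z th') x y) ->
    has_invertible_diffs Y (g th) ->
    exists (A : 'M[R]_n) (c : 'cV[R]_n), forall x, X x -> f th x = A *m f th' x + c.
  move=> th th' heq hg.
  apply: (@ident dx dy n X Y (f th) (f th') (g th) (g th') (fun _ => 0) (fun y => ln (Z th' y) - ln (Z th y)) hg).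
  move=> u v hu hv; rewrite (key th th' heq u v hu hv). by rewrite add0r.
have L2 : forall th th',
    (forall x y, X x -> Y y ->
        ebm (f th) (g th) (Z th) x y = ebm (f th') (g th') (Z th') x y) ->
    has_invertible_diffs X (f th) ->
    exists (B : 'M[R]_n) (e : 'cV[R]_n), forall y, Y y -> g th y = B *m g th' y + e.
  move=> th th' heq hf.
  apply: (@ident dy dx n Y X (g th) (g th') (f th) (f th') (fun y => ln (Z th' y) - ln (Z th y)) (fun _ => 0) hf).
  move=> u v hu hv; rewrite [LHS]inner_sym (key th th' heq v u hv hu) addr0.
  by rewrite [inner (f th' v) _]inner_sym.
split; [|split].
- move=> hf hg th th' heq.
  have [A [c hA]] := L1 th th' heq (hg th).
  case: (classic (exists x, X x)) => [[x0 hx0]|nX].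
    by exists A, c; split => //; exact: (rank_from hX (hf th) (hf th') hA hx0).
  exists 1%:M, 0; split; first by rewrite mxrank1 geq_minl.
  by move=> x hx; exfalso; apply: nX; exists x.
- move=> hg hf th th' heq.
  have [B [e hB]] := L2 th th' heq (hf th).
  case: (classic (exists y, Y y)) => [[y0 hy0]|nY].
    by exists B, e; split => //; exact: (rank_from hY (hg th) (hg th') hB hy0).
  exists 1%:M, 0; split; first by rewrite mxrank1 geq_minl.
  by move=> y hy; exfalso; apply: nY; exists y.
- move=> hf hg hg2 hf2 th th' heq.
  have [A [c hA]] := L1 th th' heq (hg th).
  have [B [e hB]] := L2 th th' heq (hf2 th).
  exists A, c, B, e; split; [|split] => //.
    have [q [qX qU]] := hf2 th.
    rewrite (diff_affine hA qX) unitmx_mul in qU.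
    by case/andP: qU => uA _; exact: mxrank_unit.
  have [p [pY pU]] := hg th.
  rewrite (diff_affine hB pY) unitmx_mul in pU.
  by case/andP: pU => uB _; exact: mxrank_unit.
Qed.
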